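(* Let $\mathcal{P}=\langle\mathcal{A}\mid\mathcal{R}\rangle$ be a presentation with $\mathcal{A}$ finite (and $\mathcal{R}$ possibly infinite), equipped with an index $\|\cdot\|:\mathcal{R}\to\mathbb{N}$, and let $(\alpha,\pi)$ be an area-penetration pair for $(\mathcal{P},\|\cdot\|)$. Let $\mathcal{S}$ be a set of words over $\mathcal{A}^{\pm1}$ whose normal closure in the free group $F(\mathcal{A})$ equals that of $\mathcal{R}$, let $\mathcal{Q}=\langle\mathcal{A}\mid\mathcal{S}\rangle$, and let $\mathrm{RArea}$ be the relational area function of $(\mathcal{P},\|\cdot\|)$ over $\mathcal{Q}$. Then for all $n$, $\delta_{\mathcal{Q}}(n)\le \alpha(n)\,\mathrm{RArea}(\pi(n))$.
   Context: An index on $\mathcal{R}$ is any function $\|\cdot\|:\mathcal{R}\to\mathbb{N}$, extended by $\|r^{-1}\|=\|r\|$. For a word $w$ over $\mathcal{A}^{\pm1}$ representing the identity, a null-$\mathcal{P}$-expression is a sequence $(x_i,r_i)_{i=1}^m$, $x_i$ words, $r_i\in\mathcal{R}^{\pm1}$, with $w$ freely equal to $\prod_{i=1}^m x_ir_ix_i^{-1}$; its area is $m$. A pair $(\alpha,\pi)$ of functions $\mathbb{N}\to\mathbb{N}$ is an area-penetration pair for $(\mathcal{P},\|\cdot\|)$ if every null-homotopic word $w$ with $|w|\le n$ admits a null-$\mathcal{P}$-expression $(x_i,r_i)_{i=1}^m$ with $m\le\alpha(n)$ and $\|r_i\|\le\pi(n)$ for all $i$. $\mathrm{Area}_{\mathcal{Q}}(w)$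 is the minimal area of a null-$\mathcal{Q}$-expression for $w$, and the Dehn function is $\delta_{\mathcal{Q}}(n)=\max\{\mathrm{Area}_{\mathcal{Q}}(w): w \text{ null-homotopic}, |w|\le n\}$. The relational area function of $(\mathcal{P},\|\cdot\|)$ over $\mathcal{Q}$ is $\mathrm{RArea}(n)=\max\{\mathrm{Area}_{\mathcal{Q}}(r): r\in\mathcal{R},\ \|r\|\le n\}\in\mathbb{N}\cup\{\infty\}$. *)

(* Defs.v *)
From mathcomp Require Import all_boot.
From mathcomp Require Import boolp.

Set Implicit Arguments.
Unset Strict Implicit.
Unset Printing Implicit Defensive.

Section Words.
Variable A : finType.

(* letters of A^{+-1}: (a, true) = a, (a, false) = a^{-1} *)
Definition letter := (A * bool)%type.
Definition word := seq letter.

Definition inv_letter (l : letter) : letter := (l.1, ~~ l.2).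
Definition inv_word (w : word) : word := rev (map inv_letter w).

Definition reduce (w : word) : word :=
  foldr (fun l acc => match acc with
                      | l' :: acc' => if l' == inv_letter l then acc' else l :: acc
                      | [::] => [:: l]
                      end) [::] w.

Definition freely_equal (u v : word) : Prop := reduce u = reduce v.

(* a null-expression is a sequence of triples (x_i, r_i, s_i) with r_i in R;
   the relator used is r_i if s_i = true and r_i^{-1} otherwise *)
Definition expr_word (e : seq (word * word * bool)) : word :=
  flatten (map (fun t => t.1.1 ++ (if t.2 then t.1.2 else inv_word t.1.2)
                                ++ inv_word t.1.1) e).

Definition NullExpr (R : word -> Prop) (w : word) (e : seq (word * word * bool)) : Prop :=
  (forall t, t \in e -> R t.1.2) /\ freely_equal w (expr_word e).

(* w is null-homotopic in <A | R>, i.e. w lies in the normal closure of R in F(A) *)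
Definition NullHom (R : word -> Prop) (w : word) : Prop :=
  exists e, NullExpr R w e.

Definition area_at (R : word -> Prop) (w : word) : pred nat :=
  fun m => `[< exists e, size e = m /\ NullExpr R w e >].

Lemma area_at_ex (R : word -> Prop) (w : word) :
  NullHom R w -> exists m, area_at R w m.
Proof.
by move=> [e he]; exists (size e); apply/asboolP; exists e.
Qed.

(* Area_R(w): minimal area of a null-R-expression (0 if w is not null-homotopic) *)
Definition Area (R : word -> Prop) (w : word) : nat :=
  match pselect (NullHom R w) with
  | left h => ex_minn (area_at_ex h)
  | right _ => 0
  end.

Definition Dehn (R : word -> Prop) (n : nat) : nat :=
  \max_(k < n.+1) \max_(t : k.-tuple letter)
     (if `[< NullHom R (tval t) >] then Area R (tval t) else 0).

Definition AreaPenetrationPair (R : word -> Prop) (idx : word -> nat)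
  (alpha pi : nat -> nat) : Prop :=
  forall n w, NullHom R w -> size w <= n ->
    exists e, NullExpr R w e /\ size e <= alpha n /\
              (forall t, t \in e -> idx t.1.2 <= pi n).

End Words.

(* extended naturals N u {oo}: None = oo *)
Definition enat := option nat.
Definition enat_le (k : nat) (x : enat) : Prop :=
  match x with Some m => k <= m | None => True end.
(* a * x, with the convention 0 * oo = 0 *)
Definition enat_mul (a : nat) (x : enat) : enat :=
  match x with Some m => Some (a * m) | None => if a == 0 then Some 0 else None end.

Definition RArea_bounded (A : finType) (R : word A -> Prop) (idx : word A -> nat)
  (S : word A -> Prop) (n : nat) : pred nat :=
  fun M => `[< forall r, R r -> idx r <= n -> Area S r <= M >].

(* relational area function: max { Area_S(r) : r in R, ||r|| <= n } in N u {oo} *)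
Definition RArea (A : finType) (R : word A -> Prop) (idx : word A -> nat)
  (S : word A -> Prop) (n : nat) : enat :=
  match pselect (exists M, RArea_bounded R idx S n M) with
  | left h => Some (ex_minn h)
  | right _ => None
  end.

(* Main.v *)
Require Import Defs.
From mathcomp Require Import all_boot.
From mathcomp Require Import boolp.

Set Implicit Arguments.
Unset Strict Implicit.
Unset Printing Implicit Defensive.

Section FG.
Variable A : finType.
Implicit Types (l : letter A) (u v w x y : word A) (f g : seq (word A * word A * bool)) (t : word A * word A * bool).

Definition cr l (acc : word A) : word A := match acc with
                      | l' :: acc' => if l' == inv_letter l then acc' else l :: acc
                      | [::] => [:: l]
                      end.

Lemma reduceE w : reduce w = foldr cr [::] w. Proof. by []. Qed.

Fixpoint red (w : word A) : bool :=
  match w with a :: ((b :: _) as t) => (b != inv_letter a) && red t | _ => true end.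

Lemma inv_letterK l : inv_letter (inv_letter l) = l.
Proof. by case: l => a b; rewrite /inv_letter /= negbK. Qed.

Lemma red_tail l y : red (l :: y) -> red y.
Proof. by case: y => //= ? ? /andP[]. Qed.

Lemma cr_red l y : red y -> red (cr l y).
Proof.
case: y => [//|l' y] Hy /=; case: eqP => [_|ne]; first exact: red_tail Hy.
by apply/andP; split; [apply/eqP | exact: Hy].
Qed.

Lemma crK l y : red y -> cr l (cr (inv_letter l) y) = y.
Proof.
case: y => [|l' y] /=; first by rewrite eqxx.
rewrite inv_letterK; case: eqP => [->|ne] Hy /=.
  case: y Hy => [//|l'' y] /= /andP[H _]; by rewrite (negbTE H).
by rewrite eqxx.
Qed.

Lemma red_fold v u : red v -> red (foldr cr v u).
Proof. by move=> Hv; elim: u => //= l u IH; apply: cr_red. Qed.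

Lemma fold_cr v x l : red v -> red x -> foldr cr v (cr l x) = cr l (foldr cr v x).
Proof.
move=> Hv; case: x => [//|l' x] Hx /=; case: eqP => [->|_] //.
by rewrite crK //; apply: red_fold.
Qed.

Lemma red_reduce u : red (reduce u).
Proof. by rewrite reduceE; apply: red_fold. Qed.

Lemma fold_reduce v u : red v -> foldr cr v u = foldr cr v (reduce u).
Proof.
move=> Hv; elim: u => //= l u IH.
by rewrite IH -fold_cr // red_reduce.
Qed.

Lemma reduce_cat u v : reduce (u ++ v) = foldr cr (reduce v) (reduce u).
Proof. by rewrite reduceE foldr_cat -reduceE fold_reduce // red_reduce. Qed.

Definition fe u v := reduce u = reduce v.

Lemma fe_cat u u' v v' : fe u u' -> fe v v' -> fe (u ++ v) (u' ++ v').
Proof. by rewrite /fe !reduce_cat => -> ->. Qed.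

Lemma fe_mid a b m m' : fe m m' -> fe (a ++ m ++ b) (a ++ m' ++ b).
Proof. by move=> H; apply: fe_cat => //; apply: fe_cat. Qed.

Lemma fe_trans u v w : fe u v -> fe v w -> fe u w.
Proof. by rewrite /fe => ->. Qed.

Lemma inv_word_cat u v : inv_word (u ++ v) = inv_word v ++ inv_word u.
Proof. by rewrite /inv_word map_cat rev_cat. Qed.

Lemma inv_wordK u : inv_word (inv_word u) = u.
Proof.
rewrite /inv_word map_rev revK -map_comp.
by rewrite (eq_map (g := id)) ?map_id // => l /=; rewrite inv_letterK.
Qed.

Lemma cancelR u : fe (u ++ inv_word u) [::].
Proof.
elim: u => [//|l u IH].
have -> : inv_word (l :: u) = inv_word u ++ [:: inv_letter l].
  by rewrite -cat1s inv_word_cat.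
have := fe_mid [:: l] [:: inv_letter l] IH.
rewrite /fe /= -catA => ->; by rewrite /= eqxx.
Qed.

Lemma cancelL u : fe (inv_word u ++ u) [::].
Proof. by have := cancelR (inv_word u); rewrite inv_wordK. Qed.

Lemma fe_inv u v : fe u v -> fe (inv_word u) (inv_word v).
Proof.
move=> H.
have h1 : fe (inv_word u) (inv_word u ++ v ++ inv_word v).
  have := fe_mid (inv_word u) [::] (cancelR v).
  by rewrite !cats0 /fe => <-.
apply: (fe_trans h1).
have h2 := fe_mid (inv_word u) (inv_word v) (esym H).
apply: (fe_trans h2).
have H' := fe_mid [::] (inv_word v) (cancelL u).
rewrite catA; exact: H'.
Qed.


Definition conjE (x : word A) (f : seq (word A * word A * bool)) :=
  map (fun t => (x ++ t.1.1, t.1.2, t.2)) f.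
Definition invE (f : seq (word A * word A * bool)) :=
  rev (map (fun t => (t.1.1, t.1.2, ~~ t.2)) f).

Lemma expr_cat f g : expr_word (f ++ g) = expr_word f ++ expr_word g.
Proof. by rewrite /expr_word map_cat flatten_cat. Qed.

Lemma expr_cons t f : expr_word (t :: f) =
  (t.1.1 ++ (if t.2 then t.1.2 else inv_word t.1.2) ++ inv_word t.1.1) ++ expr_word f.
Proof. by []. Qed.

Lemma expr_conj x f : fe (x ++ expr_word f ++ inv_word x) (expr_word (conjE x f)).
Proof.
elim: f => [|t f IH]; first exact: cancelR.
rewrite expr_cons /conjE map_cons -/(conjE x f) expr_cons /=.
set B := (t.1.1 ++ _ ++ _).
have -> : (x ++ t.1.1) ++ (if t.2 then t.1.2 else inv_word t.1.2) ++ inv_word (x ++ t.1.1)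
   = x ++ B ++ inv_word x by rewrite inv_word_cat /B -!catA.
apply: (@fe_trans _ ((x ++ B ++ inv_word x) ++ (x ++ expr_word f ++ inv_word x))); last first.
  by apply: fe_cat.
have H := fe_mid (x ++ B) (expr_word f ++ inv_word x) (cancelL x).
by rewrite -!catA in H *; rewrite /fe -H.
Qed.

Lemma expr_inv f : inv_word (expr_word f) = expr_word (invE f).
Proof.
elim: f => [//|t f IH].
rewrite expr_cons inv_word_cat IH /invE map_cons rev_cons -cats1 -/(invE f) expr_cat.
congr (_ ++ _); rewrite /expr_word /= cats0 !inv_word_cat inv_wordK catA.
by case: (t.2) => //=; rewrite inv_wordK.
Qed.

End FG.

Section Main.
Variable A : finType.
Variables (R S : word A -> Prop).
Implicit Types (w r : word A) (e f g : seq (word A * word A * bool)).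

Lemma area_spec r : NullHom S r -> exists f, NullExpr S r f /\ size f = Area S r.
Proof.
move=> h; rewrite /Area; case: pselect => [h'|//].
case: ex_minnP => m /asboolP [f [sz ne]] _; by exists f.
Qed.

Lemma area_le w g : NullExpr S w g -> Area S w <= size g.
Proof.
move=> ne; rewrite /Area; case: pselect => [h|nh].
  case: ex_minnP => m _ min; apply: min; apply/asboolP; by exists g.
by case: nh; exists g.
Qed.

Lemma nullhom_rel r : R r -> NullHom R r.
Proof.
move=> Rr; exists [:: ([::], r, true)]; split.
  by move=> t; rewrite inE => /eqP ->.
by rewrite /freely_equal /expr_word /= !cats0.
Qed.

Hypothesis HRS : forall w, NullHom R w <-> NullHom S w.

Lemma block t : R t.1.2 -> exists g, (forall u, u \in g -> S u.1.2) /\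
   size g = Area S t.1.2 /\
   fe (t.1.1 ++ (if t.2 then t.1.2 else inv_word t.1.2) ++ inv_word t.1.1) (expr_word g).
Proof.
move=> Rr; have [f [[fS fe1] sz]] := area_spec ((HRS _).1 (nullhom_rel Rr)).
pose g0 := if t.2 then f else invE f.
have g0S : forall u, u \in g0 -> S u.1.2.
  rewrite /g0; case: (t.2) => // u.
  rewrite /invE mem_rev => /mapP [v vf ->]; exact: fS vf.
have g0e : fe (if t.2 then t.1.2 else inv_word t.1.2) (expr_word g0).
  rewrite /g0; case: (t.2) => //; rewrite -expr_inv; exact: fe_inv.
exists (conjE t.1.1 g0); split; [|split].
- by move=> u /mapP [v vg ->]; exact: g0S vg.
- by rewrite size_map /g0; case: (t.2); rewrite ?size_rev ?size_map.
- apply: fe_trans (expr_conj _ _); exact: fe_mid.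
Qed.

Lemma build M e : (forall t, t \in e -> R t.1.2 /\ Area S t.1.2 <= M) ->
  exists g, (forall u, u \in g -> S u.1.2) /\ size g <= size e * M /\
            fe (expr_word e) (expr_word g).
Proof.
elim: e => [_|t e IH H]; first by exists [::].
have [Rt At] := H t (mem_head _ _).
have [g1 [g1S [g1s g1e]]] := block Rt.
have [g2 [g2S [g2s g2e]]] : exists g, (forall u, u \in g -> S u.1.2) /\ size g <= size e * M /\
            fe (expr_word e) (expr_word g).
  by apply: IH => u ue; apply: H; rewrite inE ue orbT.
exists (g1 ++ g2); split; [|split].
- by move=> u; rewrite mem_cat => /orP [] ?; [apply: g1S | apply: g2S].
- by rewrite size_cat /= mulSn g1s; apply: leq_add.
- by rewrite expr_cons expr_cat; apply: fe_cat.
Qed.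

Lemma Dehn_bound n M K :
  (forall w, NullHom R w -> size w <= n -> exists e, NullExpr R w e /\ size e <= K /\
      forall t, t \in e -> Area S t.1.2 <= M) -> Dehn S n <= K * M.
Proof.
move=> H; rewrite /Dehn; apply/bigmax_leqP => k _; apply/bigmax_leqP => t _.
case: asboolP => // hS.
have sk : size (tval t) <= n by rewrite size_tuple -ltnS ltn_ord.
have [e [[eR efe] [es eA]]] := H _ ((HRS _).2 hS) sk.
have [g [gS [gs ge]]] := @build M e (fun u ue => conj (eR u ue) (eA u ue)).
apply: leq_trans (area_le (conj gS (fe_trans efe ge))) _.
by apply: leq_trans gs _; rewrite leq_mul2r es orbT.
Qed.

End Main.

Theorem proposition2p8 (A : finType) (R : word A -> Prop) (idx : word A -> nat)
  (alpha pi : nat -> nat) (S : word A -> Prop) :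
  AreaPenetrationPair R idx alpha pi ->
  (forall w : word A, NullHom R w <-> NullHom S w) ->
  forall n : nat, enat_le (Dehn S n) (enat_mul (alpha n) (RArea R idx S (pi n))).
Proof.
move=> HAP HRS n; rewrite /RArea; case: pselect => [h|nh].
  case: ex_minnP => M /asboolP HM _ /=.
  apply: Dehn_bound => // w hw sw.
  have [e [ne [es ei]]] := HAP n w hw sw.
  exists e; split => //; split => // t te; apply: HM; last exact: ei.
  exact: ne.1 _ te.
rewrite /=; case: eqP => // a0.
have -> : 0 = 0 * 0 by [].
apply: Dehn_bound => // w hw sw.
have [e [ne [es ei]]] := HAP n w hw sw.
exists e; split => //; split; first by rewrite -a0.
by case: e es {ne ei} => [|? ?] //; rewrite a0.
Qed.
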